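(* Let $\lambda\in ba(\mathcal A)$ and $\mathscr M\subset ba(\mathcal A)$. There is a unique way of writing $\lambda=\lambda^c_{\mathscr M}+\lambda^\perp_{\mathscr M}$ with $\lambda^c_{\mathscr M},\lambda^\perp_{\mathscr M}\in ba(\mathcal A)$ such that (i) $\lambda^c_{\mathscr M}\ll m$ for some $m\in\mathbf A(\mathscr M)$, and (ii) $\lambda^\perp_{\mathscr M}\perp\mu$ for every $\mu\in\mathscr M$. If $\lambda$ is positive (resp. countably additive), then so are $\lambda^c_{\mathscr M}$ and $\lambda^\perp_{\mathscr M}$.
   Context: $\Omega$ is a set, $\mathcal A$ an algebra of subsets of $\Omega$, $ba(\mathcal A)$ the Banach lattice of bounded finitely additive real set functions on $\mathcal A$ with norm $\|\mu\|=|\mu|(\Omega)$, where $|\mu|$ is the total variation of $\mu$. For $\lambda,\mu\in ba(\mathcal A)$: $\mu\ll\lambda$ (also written $\lambda\gg\mu$) means that for every $\varepsilon>0$ there is $\delta>0$ with $|\lambda|(A)<\delta\Rightarrow|\mu|(A)<\varepsilon$ ($A\in\mathcal A$); $\mu\perp\lambda$ means that for every $\varepsilon>0$ there is $A\in\mathcal A$ with $|\mu|(A)+|\lambda|(A^c)<\varepsilon$. For $\mathscr M\subset ba(\mathcal A)$, $\mathbf A(\mathscr M)=\{\sum_n\alpha_n\frac{|\mu_n|}{1\vee\|\mu_n\|}:\mu_n\in\mathscr M,\ \alpha_n\ge0,\ \sum_n\alpha_n=1\}$ (countable convex combinations). *)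

(* Defs.v *)
From Stdlib Require Import Reals Lra List Classical ClassicalEpsilon.
Open Scope R_scope.

Definition setT {Omega : Type} : Omega -> Prop := fun _ => True.
Definition set0 {Omega : Type} : Omega -> Prop := fun _ => False.
Definition setC {Omega : Type} (A : Omega -> Prop) : Omega -> Prop := fun x => ~ A x.
Definition setU {Omega : Type} (A B : Omega -> Prop) : Omega -> Prop := fun x => A x \/ B x.
Definition disjoint {Omega : Type} (A B : Omega -> Prop) : Prop := forall x, ~ (A x /\ B x).

Definition is_algebra {Omega : Type} (Alg : (Omega -> Prop) -> Prop) : Prop :=
  Alg setT /\
  (forall A, Alg A -> Alg (setC A)) /\
  (forall A B, Alg A -> Alg B -> Alg (setU A B)).

(* Supremum of a set of reals (0 if empty or unbounded). *)
Definition Rsup (E : R -> Prop) : R :=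
  match excluded_middle_informative (bound E /\ (exists x, E x)) with
  | left H => proj1_sig (completeness E (proj1 H) (proj2 H))
  | right _ => 0
  end.

Definition Rsum_list (l : list R) : R := fold_right Rplus 0 l.

Definition is_partition {Omega : Type} (Alg : (Omega -> Prop) -> Prop)
  (A : Omega -> Prop) (l : list (Omega -> Prop)) : Prop :=
  (forall B, In B l -> Alg B) /\
  (forall i j, (i < j)%nat -> (j < length l)%nat -> disjoint (nth i l set0) (nth j l set0)) /\
  (forall x, A x <-> exists B, In B l /\ B x).

Definition tv {Omega : Type} (Alg : (Omega -> Prop) -> Prop)
  (mu : (Omega -> Prop) -> R) (A : Omega -> Prop) : R :=
  Rsup (fun s => exists l, is_partition Alg A l /\
                            s = Rsum_list (map (fun B => Rabs (mu B)) l)).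

Definition ba_norm {Omega : Type} (Alg : (Omega -> Prop) -> Prop)
  (mu : (Omega -> Prop) -> R) : R := tv Alg mu setT.

Definition is_ba {Omega : Type} (Alg : (Omega -> Prop) -> Prop)
  (mu : (Omega -> Prop) -> R) : Prop :=
  (forall A B, Alg A -> Alg B -> disjoint A B -> mu (setU A B) = mu A + mu B) /\
  (exists K, forall A, Alg A -> Rabs (mu A) <= K).

Definition abs_cont {Omega : Type} (Alg : (Omega -> Prop) -> Prop)
  (mu lam : (Omega -> Prop) -> R) : Prop :=
  forall eps, 0 < eps -> exists delta, 0 < delta /\
    forall A, Alg A -> tv Alg lam A < delta -> tv Alg mu A < eps.

Definition singular {Omega : Type} (Alg : (Omega -> Prop) -> Prop)
  (mu lam : (Omega -> Prop) -> R) : Prop :=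
  forall eps, 0 < eps -> exists A, Alg A /\ tv Alg mu A + tv Alg lam (setC A) < eps.

Definition in_AM {Omega : Type} (Alg : (Omega -> Prop) -> Prop)
  (M : ((Omega -> Prop) -> R) -> Prop) (m : (Omega -> Prop) -> R) : Prop :=
  exists (mu : nat -> (Omega -> Prop) -> R) (alpha : nat -> R),
    (forall n, M (mu n)) /\ (forall n, 0 <= alpha n) /\ infinite_sum alpha 1 /\
    forall A, Alg A ->
      infinite_sum (fun n => alpha n * (tv Alg (mu n) A / Rmax 1 (ba_norm Alg (mu n)))) (m A).

Definition positive_sf {Omega : Type} (Alg : (Omega -> Prop) -> Prop)
  (mu : (Omega -> Prop) -> R) : Prop := forall A, Alg A -> 0 <= mu A.

Definition countably_additive {Omega : Type} (Alg : (Omega -> Prop) -> Prop)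
  (mu : (Omega -> Prop) -> R) : Prop :=
  forall (An : nat -> Omega -> Prop),
    (forall n, Alg (An n)) ->
    (forall i j, i <> j -> disjoint (An i) (An j)) ->
    Alg (fun x => exists n, An n x) ->
    infinite_sum (fun n => mu (An n)) (mu (fun x => exists n, An n x)).

Definition M_decomposition {Omega : Type} (Alg : (Omega -> Prop) -> Prop)
  (M : ((Omega -> Prop) -> R) -> Prop) (lam lc lp : (Omega -> Prop) -> R) : Prop :=
  is_ba Alg lc /\ is_ba Alg lp /\
  (forall A, Alg A -> lam A = lc A + lp A) /\
  (exists m, in_AM Alg M m /\ abs_cont Alg lc m) /\
  (forall mu, M mu -> singular Alg lp mu).

(* Main.v *)
Require Import Defs.
From Stdlib Require Import Reals Lra Lia List Classical ClassicalEpsilon FunctionalExtensionality PropExtensionality Cantor.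
Open Scope R_scope.

Lemma set_ext {O : Type} (A B : O -> Prop) : (forall x, A x <-> B x) -> A = B.
Proof. intro H; apply functional_extensionality; intro x; apply propositional_extensionality; auto. Qed.

Definition sub {O : Type} (A B : O -> Prop) := forall x, A x -> B x.
Definition setI {O : Type} (A B : O -> Prop) : O -> Prop := fun x => A x /\ B x.
Definition setD {O : Type} (A B : O -> Prop) : O -> Prop := fun x => A x /\ ~ B x.

Section Alg.
Context {O : Type} (Alg : (O -> Prop) -> Prop) (HA : is_algebra Alg).

Lemma alg_T : Alg setT. Proof. apply HA. Qed.
Lemma alg_C A : Alg A -> Alg (setC A). Proof. apply HA. Qed.
Lemma alg_U A B : Alg A -> Alg B -> Alg (setU A B). Proof. apply HA. Qed.
Lemma alg_0 : Alg set0.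
Proof. replace (@set0 O) with (setC (@setT O)). apply alg_C, alg_T.
  apply set_ext; unfold setC, setT, set0; tauto. Qed.
Lemma alg_I A B : Alg A -> Alg B -> Alg (setI A B).
Proof. intros a b. replace (setI A B) with (setC (setU (setC A) (setC B))).
  apply alg_C, alg_U; apply alg_C; auto.
  apply set_ext; unfold setC, setU, setI; intro x; tauto. Qed.
Lemma alg_D A B : Alg A -> Alg B -> Alg (setD A B).
Proof. intros; apply alg_I; auto; apply alg_C; auto. Qed.
End Alg.

Lemma Rsup_ub (E : R -> Prop) x : bound E -> E x -> x <= Rsup E.
Proof. intros hb hx. unfold Rsup. destruct excluded_middle_informative as [H|H].
  - destruct completeness as [m [h1 h2]]; simpl. apply h1; auto.
  - exfalso; apply H; split; eauto. Qed.
Lemma Rsup_le (E : R -> Prop) c : (exists x, E x) -> (forall x, E x -> x <= c) -> Rsup E <= c.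
Proof. intros hx hc. unfold Rsup. destruct excluded_middle_informative as [H|H].
  - destruct completeness as [m [h1 h2]]; simpl. apply h2; intros y hy; auto.
  - exfalso; apply H; split; auto. exists c; intros y hy; auto. Qed.

Section FA.
Context {O : Type} (Alg : (O -> Prop) -> Prop) (HA : is_algebra Alg).
Definition fa (phi : (O -> Prop) -> R) :=
  forall A B, Alg A -> Alg B -> disjoint A B -> phi (setU A B) = phi A + phi B.
Definition pos (phi : (O -> Prop) -> R) := forall A, Alg A -> 0 <= phi A.
Definition bdd (phi : (O -> Prop) -> R) := exists K, forall A, Alg A -> Rabs (phi A) <= K.

Variable phi : (O -> Prop) -> R.
Hypothesis Hfa : fa phi.

Lemma fa_0 : phi set0 = 0.
Proof. assert (h := Hfa set0 set0 (alg_0 _ HA) (alg_0 _ HA)).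
  replace (setU set0 set0) with (@set0 O) in h.
  - assert (d : disjoint (@set0 O) set0) by (unfold disjoint, set0; tauto). specialize (h d); lra.
  - apply set_ext; unfold setU, set0; tauto. Qed.

Lemma fa_split A C : Alg A -> Alg C -> phi A = phi (setI A C) + phi (setD A C).
Proof. intros a c. rewrite <- Hfa. f_equal. apply set_ext; unfold setU, setI, setD; intro x; tauto.
  apply alg_I; auto. apply alg_D; auto. unfold disjoint, setI, setD; intros x; tauto. Qed.

Lemma fa_sub B A : Alg A -> Alg B -> sub B A -> phi A = phi B + phi (setD A B).
Proof. intros a b s. rewrite (fa_split A B) by auto. f_equal. f_equal.
  apply set_ext; unfold setI, sub in *; intro x; split; [tauto| intro; split; auto]. Qed.

Lemma fa_compl A : Alg A -> phi setT = phi A + phi (setC A).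
Proof. intro a. rewrite <- Hfa; auto. f_equal. apply set_ext; unfold setU, setC, setT; intro x; tauto.
  apply alg_C; auto. unfold disjoint, setC; tauto. Qed.

Lemma pos_mono B A : pos phi -> Alg A -> Alg B -> sub B A -> phi B <= phi A.
Proof. intros p a b s. rewrite (fa_sub B A) by auto. assert (0 <= phi (setD A B)) by (apply p, alg_D; auto). lra. Qed.
End FA.

Lemma Rabs_bnd x K : Rabs x <= K -> - K <= x <= K.
Proof. unfold Rabs; destruct Rcase_abs; intros; lra. Qed.

Definition Sd {O : Type} (Alg : (O -> Prop) -> Prop) (phi m : (O -> Prop) -> R) (d : R) (A : O -> Prop) : R :=
  Rsup (fun x => exists B, Alg B /\ sub B A /\ m B < d /\ x = phi B).

Definition perp {O : Type} (Alg : (O -> Prop) -> Prop) (phi m : (O -> Prop) -> R) (A : O -> Prop) : R :=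
  - Rsup (fun x => exists d, 0 < d /\ x = - Sd Alg phi m d A).

Section S.
Context {O : Type} (Alg : (O -> Prop) -> Prop) (HA : is_algebra Alg).
Variables phi m : (O -> Prop) -> R.
Hypothesis Hfa : fa Alg phi.
Hypothesis Hbd : bdd Alg phi.
Hypothesis Hmfa : fa Alg m.
Hypothesis Hmpos : pos Alg m.

Lemma S_ge d A B : Alg B -> sub B A -> m B < d -> phi B <= Sd Alg phi m d A.
Proof using HA Hfa Hbd Hmfa Hmpos. intros. apply Rsup_ub. destruct Hbd as [K HK]. exists K; intros x [C [c [_ [_ ->]]]].
  specialize (HK C c). apply Rabs_bnd in HK; lra. eauto 10. Qed.

Lemma S_le d A c : 0 < d -> (forall B, Alg B -> sub B A -> m B < d -> phi B <= c) -> Sd Alg phi m d A <= c.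
Proof using HA Hfa Hbd Hmfa Hmpos. intros hd h. apply Rsup_le. exists (phi set0), set0. repeat split; auto.
  apply alg_0; auto. intros x []. rewrite (fa_0 Alg HA m Hmfa); auto.
  intros x [B [b [s [l ->]]]]; auto. Qed.

Lemma S_nonneg d A : 0 < d -> 0 <= Sd Alg phi m d A.
Proof using HA Hfa Hbd Hmfa Hmpos. intro hd. rewrite <- (fa_0 Alg HA phi Hfa). apply S_ge. apply alg_0; auto. intros x [].
  rewrite (fa_0 Alg HA m Hmfa); auto. Qed.

Lemma S_mono d1 d2 A : 0 < d1 -> d1 <= d2 -> Sd Alg phi m d1 A <= Sd Alg phi m d2 A.
Proof using HA Hfa Hbd Hmfa Hmpos. intros h1 h2. apply S_le; auto. intros B b s l. apply S_ge; auto; lra. Qed.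

Lemma S_pos_le d A : 0 < d -> pos Alg phi -> Alg A -> Sd Alg phi m d A <= phi A.
Proof using HA Hfa Hbd Hmfa Hmpos. intros hd p a. apply S_le; auto. intros B b s l. apply (pos_mono Alg HA); auto. Qed.

Lemma S_union_le d A1 A2 : 0 < d -> Alg A1 -> Alg A2 -> disjoint A1 A2 ->
  Sd Alg phi m d (setU A1 A2) <= Sd Alg phi m d A1 + Sd Alg phi m d A2.
Proof using HA Hfa Hbd Hmfa Hmpos. intros hd a1 a2 dj. apply S_le; auto. intros B b s l.
  rewrite (fa_split Alg HA phi Hfa B A1) by auto.
  assert (m (setI B A1) <= m B) by (apply (pos_mono Alg HA); auto; [apply alg_I; auto| intros x []; auto]).
  assert (m (setD B A1) <= m B) by (apply (pos_mono Alg HA); auto; [apply alg_D; auto| intros x []; auto]).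
  apply Rplus_le_compat; apply S_ge; try lra.
  apply alg_I; auto. intros x []; auto.
  apply alg_D; auto. intros x [bx nx]. destruct (s x bx); tauto. Qed.

Lemma S_union_ge d1 d2 A1 A2 : 0 < d1 -> 0 < d2 -> Alg A1 -> Alg A2 -> disjoint A1 A2 ->
  Sd Alg phi m d1 A1 + Sd Alg phi m d2 A2 <= Sd Alg phi m (d1 + d2) (setU A1 A2).
Proof using HA Hfa Hbd Hmfa Hmpos. intros h1 h2 a1 a2 dj.
  cut (Sd Alg phi m d1 A1 <= Sd Alg phi m (d1 + d2) (setU A1 A2) - Sd Alg phi m d2 A2). lra.
  apply S_le; auto. intros B1 b1 s1 l1.
  cut (Sd Alg phi m d2 A2 <= Sd Alg phi m (d1 + d2) (setU A1 A2) - phi B1). lra.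
  apply S_le; auto. intros B2 b2 s2 l2.
  assert (dB : disjoint B1 B2) by (intros x [u v]; apply (dj x); auto).
  assert (e := Hfa B1 B2 b1 b2 dB). assert (e' := Hmfa B1 B2 b1 b2 dB).
  cut (phi (setU B1 B2) <= Sd Alg phi m (d1 + d2) (setU A1 A2)). lra.
  apply S_ge. apply alg_U; auto. intros x [u|u]; [left|right]; auto. lra. Qed.

Lemma perp_le d A : 0 < d -> perp Alg phi m A <= Sd Alg phi m d A.
Proof using HA Hfa Hbd Hmfa Hmpos. intro hd. unfold perp. cut (- Sd Alg phi m d A <= Rsup (fun x => exists d, 0 < d /\ x = - Sd Alg phi m d A)). lra.
  apply Rsup_ub. exists 0. intros x [e [he ->]]. assert (h := S_nonneg e A he). lra. eauto. Qed.

Lemma perp_nonneg A : 0 <= perp Alg phi m A.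
Proof using HA Hfa Hbd Hmfa Hmpos. unfold perp. cut (Rsup (fun x => exists d, 0 < d /\ x = - Sd Alg phi m d A) <= 0). lra.
  apply Rsup_le. exists (- Sd Alg phi m 1 A). exists 1; split; auto; lra.
  intros x [e [he ->]]. assert (h := S_nonneg e A he). lra. Qed.

Lemma perp_approx A eta : 0 < eta -> exists d, 0 < d /\ Sd Alg phi m d A <= perp Alg phi m A + eta.
Proof using HA Hfa Hbd Hmfa Hmpos. intro he. apply NNPP; intro H.
  assert (h : forall d, 0 < d -> perp Alg phi m A + eta < Sd Alg phi m d A).
  { intros d hd. apply Rnot_le_lt. intro h; apply H; eauto. }
  assert (Rsup (fun x => exists d, 0 < d /\ x = - Sd Alg phi m d A) <= - (perp Alg phi m A + eta)).
  { apply Rsup_le. exists (- Sd Alg phi m 1 A). exists 1; split; auto; lra.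
    intros x [e [he' ->]]. specialize (h e he'). lra. }
  unfold perp at 1 in H0. lra. Qed.
End S.

Lemma le_eps x y : (forall eta, 0 < eta -> x <= y + eta) -> x <= y.
Proof. intro h. apply Rnot_lt_le; intro l. specialize (h ((x - y)/2)). lra. Qed.

Section Perp.
Context {O : Type} (Alg : (O -> Prop) -> Prop) (HA : is_algebra Alg).
Variables phi m : (O -> Prop) -> R.
Hypothesis Hfa : fa Alg phi.
Hypothesis Hbd : bdd Alg phi.
Hypothesis Hmfa : fa Alg m.
Hypothesis Hmpos : pos Alg m.
Hypothesis Hpos : pos Alg phi.

Lemma S_approx d A eta : 0 < d -> 0 < eta -> exists B, Alg B /\ sub B A /\ m B < d /\
   Sd Alg phi m d A - eta < phi B.
Proof using HA Hfa Hbd Hmfa Hmpos Hpos. intros hd he. apply NNPP; intro H.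
  assert (Sd Alg phi m d A <= Sd Alg phi m d A - eta); [|lra].
  apply (S_le Alg HA phi m Hfa Hbd Hmfa Hmpos); auto. intros B b s l. apply Rnot_lt_le; intro h; apply H; eauto 10. Qed.

Lemma perp_fa : fa Alg (perp Alg phi m).
Proof using HA Hfa Hbd Hmfa Hmpos Hpos. intros A1 A2 a1 a2 dj. apply Rle_antisym.
  - apply le_eps; intros eta he.
    destruct (perp_approx Alg HA phi m Hfa Hbd Hmfa Hmpos A1 (eta/2)) as [d1 [h1 k1]]; [lra|].
    destruct (perp_approx Alg HA phi m Hfa Hbd Hmfa Hmpos A2 (eta/2)) as [d2 [h2 k2]]; [lra|].
    assert (hd : 0 < Rmin d1 d2) by (apply Rmin_glb_lt; auto).
    assert (e1 := perp_le Alg HA phi m Hfa Hbd Hmfa Hmpos _ (setU A1 A2) hd).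
    assert (e2 := S_union_le Alg HA phi m Hfa Hbd Hmfa Hmpos _ A1 A2 hd a1 a2 dj).
    assert (e3 := S_mono Alg HA phi m Hfa Hbd Hmfa Hmpos _ _ A1 hd (Rmin_l d1 d2)).
    assert (e4 := S_mono Alg HA phi m Hfa Hbd Hmfa Hmpos _ _ A2 hd (Rmin_r d1 d2)). lra.
  - apply le_eps; intros eta he.
    destruct (perp_approx Alg HA phi m Hfa Hbd Hmfa Hmpos (setU A1 A2) eta) as [d [h k]]; [lra|].
    assert (hd : 0 < d/2) by lra.
    assert (e1 := perp_le Alg HA phi m Hfa Hbd Hmfa Hmpos _ A1 hd).
    assert (e2 := perp_le Alg HA phi m Hfa Hbd Hmfa Hmpos _ A2 hd).
    assert (e3 := S_union_ge Alg HA phi m Hfa Hbd Hmfa Hmpos _ _ A1 A2 hd hd a1 a2 dj).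
    replace (d/2 + d/2) with d in e3 by field. lra. Qed.


Lemma perp_le_phi A : Alg A -> perp Alg phi m A <= phi A.
Proof using HA Hfa Hbd Hmfa Hmpos Hpos. intro a. assert (h1 : 0 < 1) by lra. assert (e1 := perp_le Alg HA phi m Hfa Hbd Hmfa Hmpos _ A h1).
  assert (e2 := S_pos_le Alg HA phi m Hfa Hbd Hmfa Hmpos _ A h1 Hpos a). lra. Qed.

Lemma perp_sing eps : 0 < eps -> exists A, Alg A /\ perp Alg phi m A + m (setC A) < eps.
Proof using HA Hfa Hbd Hmfa Hmpos Hpos. intro he. set (t := perp Alg phi m setT). set (eta := eps / 4).
  destruct (perp_approx Alg HA phi m Hfa Hbd Hmfa Hmpos setT eta) as [d0 [h0 k0]]; [unfold eta; lra|].
  set (d1 := Rmin (d0/2) (eps/2)). assert (hd1 : 0 < d1) by (apply Rmin_glb_lt; lra).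
  destruct (S_approx d1 setT eta hd1) as [B [b [_ [mB kB]]]]; [unfold eta; lra|].
  assert (t1 := perp_le Alg HA phi m Hfa Hbd Hmfa Hmpos _ setT hd1).
  assert (Sd Alg phi m (d0/2) (setC B) <= 2 * eta).
  { apply (S_le Alg HA phi m Hfa Hbd Hmfa Hmpos); [lra|]. intros C c s l.
    assert (dj : disjoint B C) by (intros x [u v]; apply (s x v); auto).
    assert (e := Hfa B C b c dj). assert (e' := Hmfa B C b c dj).
    assert (phi (setU B C) <= Sd Alg phi m d0 setT).
    { apply (S_ge Alg HA phi m Hfa Hbd Hmfa Hmpos). apply alg_U; auto. intros x _; exact I.
      assert (d1 <= d0/2) by apply Rmin_l. lra. }
    fold t in k0. unfold t in *. clearbody eta d1. lra. }
  exists (setC B). split. apply alg_C; auto.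
  replace (setC (setC B)) with B.
  assert (perp Alg phi m (setC B) <= Sd Alg phi m (d0/2) (setC B)) by (apply perp_le; auto; lra).
  assert (d1 <= eps/2) by apply Rmin_r. unfold eta in *; lra.
  apply set_ext; unfold setC; intro x; tauto. Qed.

Lemma perp_ac eps : 0 < eps -> exists d, 0 < d /\ forall A, Alg A -> m A < d -> phi A - perp Alg phi m A < eps.
Proof using HA Hfa Hbd Hmfa Hmpos Hpos. intro he. set (eta := eps / 2).
  destruct (perp_approx Alg HA phi m Hfa Hbd Hmfa Hmpos setT eta) as [d0 [h0 k0]]; [unfold eta; lra|].
  exists (d0/2); split; [lra|]. intros A a mA.
  assert (Sd Alg phi m (d0/2) (setC A) <= perp Alg phi m setT + eta - phi A).
  { apply (S_le Alg HA phi m Hfa Hbd Hmfa Hmpos); [lra|]. intros C c s l.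
    assert (dj : disjoint A C) by (intros x [u v]; apply (s x v); auto).
    assert (e := Hfa A C a c dj). assert (e' := Hmfa A C a c dj).
    assert (phi (setU A C) <= Sd Alg phi m d0 setT).
    { apply (S_ge Alg HA phi m Hfa Hbd Hmfa Hmpos). apply alg_U; auto. intros x _; exact I. lra. }
    lra. }
  assert (perp Alg phi m (setC A) <= Sd Alg phi m (d0/2) (setC A)) by (apply perp_le; auto; lra).
  assert (e := fa_compl Alg HA _ perp_fa A a). unfold eta in *; lra. Qed.
End Perp.

Section Mono.
Context {O : Type} (Alg : (O -> Prop) -> Prop) (HA : is_algebra Alg).

Lemma perp_mono_m phi m m' : fa Alg phi -> bdd Alg phi -> fa Alg m -> fa Alg m' -> pos Alg m -> pos Alg m' ->
  (forall eps, 0 < eps -> exists d, 0 < d /\ forall B, Alg B -> m B < d -> m' B < eps) ->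
  forall A, perp Alg phi m A <= perp Alg phi m' A.
Proof. intros f b fm fm' pm pm' dom A. apply le_eps; intros eta he.
  destruct (perp_approx Alg HA phi m' f b fm' pm' A eta he) as [d' [hd' k]].
  destruct (dom d' hd') as [d [hd kd]].
  assert (perp Alg phi m A <= Sd Alg phi m d A) by (apply (perp_le Alg HA phi m f b fm pm); auto).
  assert (Sd Alg phi m d A <= Sd Alg phi m' d' A).
  { apply (S_le Alg HA phi m f b fm pm); auto. intros B bb s l. apply (S_ge Alg HA phi m' f b fm' pm'); auto. }
  lra. Qed.

Lemma perp_mono_phi phi1 phi2 m : fa Alg phi1 -> bdd Alg phi1 -> fa Alg phi2 -> bdd Alg phi2 -> fa Alg m -> pos Alg m ->
  (forall A, Alg A -> phi1 A <= phi2 A) ->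
  forall A, perp Alg phi1 m A <= perp Alg phi2 m A.
Proof. intros f1 b1 f2 b2 fm pm le A. apply le_eps; intros eta he.
  destruct (perp_approx Alg HA phi2 m f2 b2 fm pm A eta he) as [d [hd k]].
  assert (perp Alg phi1 m A <= Sd Alg phi1 m d A) by (apply (perp_le Alg HA phi1 m f1 b1 fm pm); auto).
  assert (Sd Alg phi1 m d A <= Sd Alg phi2 m d A).
  { apply (S_le Alg HA phi1 m f1 b1 fm pm); auto. intros B bb s l. apply Rle_trans with (phi2 B); auto.
    apply (S_ge Alg HA phi2 m f2 b2 fm pm); auto. }
  lra. Qed.
End Mono.

Definition zero {O : Type} : (O -> Prop) -> R := fun _ => 0.
Definition Pp {O : Type} (Alg : (O -> Prop) -> Prop) (phi : (O -> Prop) -> R) (A : O -> Prop) : R :=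
  Sd Alg phi zero 1 A.
Definition neg {O : Type} (phi : (O -> Prop) -> R) : (O -> Prop) -> R := fun A => - phi A.

Section Pp.
Context {O : Type} (Alg : (O -> Prop) -> Prop) (HA : is_algebra Alg).
Variable phi : (O -> Prop) -> R.
Hypothesis Hfa : fa Alg phi.
Hypothesis Hbd : bdd Alg phi.

Lemma zero_fa : fa Alg (@zero O). Proof. intros A B _ _ _; unfold zero; lra. Qed.
Lemma zero_pos : pos Alg (@zero O). Proof. intros A _; unfold zero; lra. Qed.

Lemma Pp_ge A B : Alg B -> sub B A -> phi B <= Pp Alg phi A.
Proof using HA Hfa Hbd. intros. apply (S_ge Alg HA phi zero Hfa Hbd zero_fa zero_pos); auto; try (unfold zero; lra). Qed.
Lemma Pp_le A c : (forall B, Alg B -> sub B A -> phi B <= c) -> Pp Alg phi A <= c.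
Proof using HA Hfa Hbd. intros. apply (S_le Alg HA phi zero Hfa Hbd zero_fa zero_pos); auto. lra. Qed.
Lemma Pp_nonneg A : 0 <= Pp Alg phi A.
Proof using HA Hfa Hbd. apply (S_nonneg Alg HA phi zero Hfa Hbd zero_fa zero_pos). lra. Qed.
Lemma Sd_zero d A : 0 < d -> Sd Alg phi zero d A = Pp Alg phi A.
Proof using HA Hfa Hbd. intro hd. apply Rle_antisym.
  - apply (S_le Alg HA phi zero Hfa Hbd zero_fa zero_pos); auto. intros; apply Pp_ge; auto.
  - apply Pp_le. intros; apply (S_ge Alg HA phi zero Hfa Hbd zero_fa zero_pos); auto; try (unfold zero; lra). Qed.
Lemma Pp_fa : fa Alg (Pp Alg phi).
Proof using HA Hfa Hbd. intros A1 A2 a1 a2 dj. apply Rle_antisym.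
  - apply (S_union_le Alg HA phi zero Hfa Hbd zero_fa zero_pos); auto; lra.
  - assert (h : 0 < 1/2) by lra.
    assert (e := S_union_ge Alg HA phi zero Hfa Hbd zero_fa zero_pos _ _ A1 A2 h h a1 a2 dj).
    rewrite !Sd_zero in e by lra. exact e. Qed.
Lemma Pp_bdd : bdd Alg (Pp Alg phi).
Proof using HA Hfa Hbd. destruct Hbd as [K HK]. exists K. intros A a. rewrite Rabs_right.
  apply Pp_le. intros B b _. specialize (HK B b). apply Rabs_bnd in HK; lra.
  apply Rle_ge, Pp_nonneg. Qed.
Lemma Pp_ge_self A : Alg A -> phi A <= Pp Alg phi A.
Proof using HA Hfa Hbd. intro; apply Pp_ge; auto. intros x h; exact h. Qed.
End Pp.

Lemma neg_fa {O} Alg (phi : (O -> Prop) -> R) : fa Alg phi -> fa Alg (neg phi).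
Proof. intros h A B a b d. unfold neg. rewrite h; auto; lra. Qed.
Lemma neg_bdd {O} Alg (phi : (O -> Prop) -> R) : bdd Alg phi -> bdd Alg (neg phi).
Proof. intros [K h]. exists K. intros A a. unfold neg. rewrite Rabs_Ropp. auto. Qed.

Definition Ul {O : Type} (l : list (O -> Prop)) : O -> Prop := fun x => exists B, In B l /\ B x.

Lemma Rsum_cons a l : Rsum_list (a :: l) = a + Rsum_list l.
Proof. reflexivity. Qed.

Section TV.
Context {O : Type} (Alg : (O -> Prop) -> Prop) (HA : is_algebra Alg).
Variable phi : (O -> Prop) -> R.
Hypothesis Hfa : fa Alg phi.
Hypothesis Hbd : bdd Alg phi.

Lemma part_decomp (l : list (O -> Prop)) :
  (forall B, In B l -> Alg B) ->
  (forall i j, (i < j)%nat -> (j < length l)%nat -> disjoint (nth i l set0) (nth j l set0)) ->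
  exists C D, Alg C /\ Alg D /\ sub C (Ul l) /\ sub D (Ul l) /\
     Rsum_list (map (fun B => Rabs (phi B)) l) = phi C - phi D.
Proof using HA Hfa. induction l as [|B l IH]; intros hA hD.
  - exists set0, set0. split; [apply alg_0; auto|]. split; [apply alg_0; auto|].
    split; [intros x []|]. split; [intros x []|]. simpl. rewrite (fa_0 Alg HA phi Hfa); lra.
  - destruct IH as [C [D [c [d [sc [sd e]]]]]].
    + intros; apply hA; simpl; auto.
    + intros i j h1 h2. apply (hD (S i) (S j)); simpl; lia.
    + assert (b : Alg B) by (apply hA; simpl; auto).
      assert (dB : forall x, B x -> Ul l x -> False).
      { intros x bx [B' [i bx']]. destruct (In_nth l B' set0 i) as [k [k1 k2]].
        refine (hD 0%nat (S k) _ _ x _); simpl; try lia. split; auto. rewrite k2; auto. }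
      rewrite map_cons, Rsum_cons, e.
      destruct (Rle_lt_dec 0 (phi B)) as [p|p].
      * exists (setU B C), D. repeat split; auto. apply alg_U; auto.
        intros x [u|u]. exists B; split; simpl; auto. destruct (sc x u) as [B' [i u']]. exists B'; split; simpl; auto.
        intros x u. destruct (sd x u) as [B' [i u']]. exists B'; split; simpl; auto.
        rewrite Hfa; auto. rewrite Rabs_right; lra. intros x [u v]; apply (dB x); auto.
      * exists C, (setU B D). repeat split; auto. apply alg_U; auto.
        intros x u. destruct (sc x u) as [B' [i u']]. exists B'; split; simpl; auto.
        intros x [u|u]. exists B; split; simpl; auto. destruct (sd x u) as [B' [i u']]. exists B'; split; simpl; auto.
        rewrite Hfa; auto. rewrite Rabs_left; lra. intros x [u v]; apply (dB x); auto. Qed.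

Lemma part_sum_le A l : is_partition Alg A l ->
  Rsum_list (map (fun B => Rabs (phi B)) l) <= Pp Alg phi A + Pp Alg (neg phi) A.
Proof using HA Hfa Hbd. intros [h1 [h2 h3]]. destruct (part_decomp l h1 h2) as [C [D [c [d [sc [sd e]]]]]].
  rewrite e. assert (sub C A) by (intros x u; exact (proj2 (h3 x) (sc x u))).
  assert (sub D A) by (intros x u; exact (proj2 (h3 x) (sd x u))).
  assert (phi C <= Pp Alg phi A) by (apply Pp_ge; auto).
  assert (neg phi D <= Pp Alg (neg phi) A) by (apply Pp_ge; auto; [apply neg_fa|apply neg_bdd]; auto).
  unfold neg in *. lra. Qed.

Lemma tv_eq A : Alg A -> tv Alg phi A = Pp Alg phi A + Pp Alg (neg phi) A.
Proof using HA Hfa Hbd.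
  intro a. assert (fn := neg_fa Alg phi Hfa). assert (bn := neg_bdd Alg phi Hbd).
  set (E := fun s => exists l, is_partition Alg A l /\ s = Rsum_list (map (fun B => Rabs (phi B)) l)).
  assert (bE : bound E). { exists (Pp Alg phi A + Pp Alg (neg phi) A). intros s [l [p ->]]. apply part_sum_le; auto. }
  apply Rle_antisym.
  - unfold tv. apply Rsup_le.
    + exists (Rsum_list (map (fun B => Rabs (phi B)) (A :: nil))), (A :: nil). split; auto.
      split; [|split]. intros B [<-|[]]; auto. intros i j h1 h2; simpl in h2; lia.
      intro x; split. intro u; exists A; simpl; auto. intros [B [[<-|[]] u]]; auto.
    + intros s [l [p ->]]. apply part_sum_le; auto.
  - cut (Pp Alg phi A <= tv Alg phi A - Pp Alg (neg phi) A). lra.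
    apply Pp_le; auto. intros C c sC.
    cut (Pp Alg (neg phi) A <= tv Alg phi A - phi C). lra.
    apply Pp_le; auto. intros D d sD. unfold neg.
    set (l := setD C D :: setD D C :: setD A (setU (setD C D) (setD D C)) :: nil).
    assert (hp : is_partition Alg A l).
    { split; [|split].
      - intros B h. simpl in h. destruct h as [<-|[<-|[<-|[]]]]; try (apply alg_D; auto; fail).
        apply alg_D; auto. apply alg_U; auto; apply alg_D; auto.
      - intros i j h1 h2. simpl in h2.
        destruct i as [|[|[|i]]]; destruct j as [|[|[|j]]]; try lia; simpl; intros x; unfold setD, setU; tauto.
      - intros x; split.
        + intro u. destruct (classic (C x)); destruct (classic (D x)).
          * exists (setD A (setU (setD C D) (setD D C))); split. simpl; auto. unfold setD, setU; tauto.
          * exists (setD C D); split. simpl; auto. unfold setD; tauto.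
          * exists (setD D C); split. simpl; auto. unfold setD; tauto.
          * exists (setD A (setU (setD C D) (setD D C))); split. simpl; auto. unfold setD, setU; tauto.
        + intros [B [h u]]. simpl in h. destruct h as [<-|[<-|[<-|[]]]]; unfold setD in u; intuition. }
    assert (Rsum_list (map (fun B => Rabs (phi B)) l) <= tv Alg phi A).
    { unfold tv. apply Rsup_ub; auto. exists l; split; auto. }
    unfold l in H. simpl in H.
    assert (e1 := fa_split Alg HA phi Hfa C D c d).
    assert (e2 := fa_split Alg HA phi Hfa D C d c).
    replace (setI D C) with (setI C D) in e2 by (apply set_ext; unfold setI; tauto).
    assert (r1 := Rle_abs (phi (setD C D))).
    assert (r2 := Rabs_Ropp (phi (setD D C))). assert (r3 := Rle_abs (- phi (setD D C))).
    assert (r4 := Rabs_pos (phi (setD A (setU (setD C D) (setD D C))))).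
    lra. Qed.

Lemma tv_fa : fa Alg (tv Alg phi).
Proof using HA Hfa Hbd. intros A B a b d. rewrite !tv_eq; auto. 2: apply alg_U; auto.
  rewrite (Pp_fa Alg HA phi Hfa Hbd); auto. rewrite (Pp_fa Alg HA (neg phi)); auto.
  lra. apply neg_fa; auto. apply neg_bdd; auto. Qed.

Lemma tv_nonneg : pos Alg (tv Alg phi).
Proof using HA Hfa Hbd. intros A a. rewrite tv_eq; auto.
  assert (h1 := Pp_nonneg Alg HA phi Hfa Hbd A).
  assert (h2 := Pp_nonneg Alg HA (neg phi) (neg_fa _ _ Hfa) (neg_bdd _ _ Hbd) A). lra. Qed.

Lemma tv_ge_abs A C : Alg A -> Alg C -> sub C A -> Rabs (phi C) <= tv Alg phi A.
Proof using HA Hfa Hbd. intros a c s. rewrite tv_eq; auto.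
  assert (h1 := Pp_nonneg Alg HA phi Hfa Hbd A).
  assert (h2 := Pp_nonneg Alg HA (neg phi) (neg_fa _ _ Hfa) (neg_bdd _ _ Hbd) A).
  assert (h3 := Pp_ge Alg HA phi Hfa Hbd A C c s).
  assert (h4 := Pp_ge Alg HA (neg phi) (neg_fa _ _ Hfa) (neg_bdd _ _ Hbd) A C c s).
  assert (h5 : - phi C <= Pp Alg (neg phi) A) by exact h4.
  unfold Rabs; destruct Rcase_abs; lra. Qed.

Lemma tv_mono A C : Alg A -> Alg C -> sub C A -> tv Alg phi C <= tv Alg phi A.
Proof using HA Hfa Hbd. intros. apply (pos_mono Alg HA); auto. apply tv_fa. apply tv_nonneg. Qed.

Lemma tv_bdd : bdd Alg (tv Alg phi).
Proof using HA Hfa Hbd. exists (tv Alg phi setT). intros A a. rewrite Rabs_right.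
  apply tv_mono; auto. apply alg_T; auto. intros x _; exact I. apply Rle_ge, tv_nonneg; auto. Qed.
End TV.

Section TVpos.
Context {O : Type} (Alg : (O -> Prop) -> Prop) (HA : is_algebra Alg).

Lemma tv_diff (a b : (O -> Prop) -> R) A : fa Alg a -> fa Alg b -> pos Alg a -> pos Alg b ->
  bdd Alg (fun B => a B - b B) -> Alg A -> tv Alg (fun B => a B - b B) A <= a A + b A.
Proof. intros fa' fb pa pb bd hA.
  assert (ff : fa Alg (fun B => a B - b B)) by (intros X Y x y d; rewrite fa', fb; auto; lra).
  rewrite tv_eq; auto.
  assert (Pp Alg (fun B => a B - b B) A <= a A).
  { apply Pp_le; auto. intros B bb s. assert (a B <= a A) by (apply (pos_mono Alg HA); auto).
    assert (0 <= b B) by auto. lra. }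
  assert (Pp Alg (neg (fun B => a B - b B)) A <= b A).
  { apply Pp_le; auto. apply neg_fa; auto. apply neg_bdd; auto. intros B bb s. unfold neg.
    assert (b B <= b A) by (apply (pos_mono Alg HA); auto).
    assert (0 <= a B) by auto. lra. }
  lra. Qed.

Lemma tv_pos (a : (O -> Prop) -> R) A : fa Alg a -> pos Alg a -> bdd Alg a -> Alg A -> tv Alg a A = a A.
Proof. intros f p b hA. rewrite tv_eq; auto.
  assert (Pp Alg a A = a A).
  { apply Rle_antisym. apply Pp_le; auto. intros B bb s; apply (pos_mono Alg HA); auto.
    apply Pp_ge_self; auto. }
  assert (Pp Alg (neg a) A = 0).
  { apply Rle_antisym. apply Pp_le; auto. apply neg_fa; auto. apply neg_bdd; auto.
    intros B bb s; unfold neg; assert (0 <= a B) by auto; lra.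
    apply Pp_nonneg; auto. apply neg_fa; auto. apply neg_bdd; auto. }
  lra. Qed.
End TVpos.

Lemma cv_le u l c : Un_cv u l -> (forall n, u n <= c) -> l <= c.
Proof. intros h b. apply Rnot_lt_le; intro k. destruct (h (l - c)) as [N hN]. lra.
  specialize (hN N (le_n N)). specialize (b N). unfold Rdist in hN. apply Rabs_def2 in hN. lra. Qed.
Lemma cv_ge u l c : Un_cv u l -> (forall n, c <= u n) -> c <= l.
Proof. intros h b. apply Rnot_lt_le; intro k. destruct (h (c - l)) as [N hN]. lra.
  specialize (hN N (le_n N)). specialize (b N). unfold Rdist in hN. apply Rabs_def2 in hN. lra. Qed.

Definition ser (a : nat -> R) : R :=
  match excluded_middle_informative (exists l, infinite_sum a l) with
  | left H => proj1_sig (constructive_indefinite_description _ H)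
  | right _ => 0 end.
Lemma ser_spec a : (exists l, infinite_sum a l) -> infinite_sum a (ser a).
Proof. intro h. unfold ser. destruct excluded_middle_informative as [H|H]; [|tauto].
  destruct constructive_indefinite_description; auto. Qed.

Lemma sum_mono a n k : (forall i, 0 <= a i) -> (n <= k)%nat -> sum_f_R0 a n <= sum_f_R0 a k.
Proof. intros p h. induction h. lra. rewrite tech5. specialize (p (S m)). lra. Qed.

Lemma sum_nonneg a n : (forall i, 0 <= a i) -> 0 <= sum_f_R0 a n.
Proof. intro p. induction n; simpl; auto. specialize (p (S n)); lra. Qed.

Lemma sum_diff_le a b N j : (forall i, a i <= b i) ->
  sum_f_R0 a (N + j) - sum_f_R0 a N <= sum_f_R0 b (N + j) - sum_f_R0 b N.
Proof. intro h. induction j. rewrite Nat.add_0_r; lra. rewrite Nat.add_succ_r, !tech5.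
  specialize (h (S (N + j))). lra. Qed.

Lemma is_sum_bound a N : (forall i, 0 <= a i) -> infinite_sum a 1 -> sum_f_R0 a N <= 1.
Proof. intros p h. apply sum_incr; auto. Qed.

Section AM.
Context {O : Type} (Alg : (O -> Prop) -> Prop) (HA : is_algebra Alg).
Variable sig : nat -> (O -> Prop) -> R.
Hypothesis Hsfa : forall n, fa Alg (sig n).
Hypothesis Hsbd : forall n, bdd Alg (sig n).
Variable alpha : nat -> R.
Hypothesis Hap : forall n, 0 <= alpha n.
Hypothesis Has : infinite_sum alpha 1.

Definition nu n A := tv Alg (sig n) A / Rmax 1 (ba_norm Alg (sig n)).
Definition term A n := alpha n * nu n A.

Lemma nu_bnd n A : Alg A -> 0 <= nu n A <= 1.
Proof using HA Hsfa Hsbd. intro a. unfold nu. assert (h1 : 0 < Rmax 1 (ba_norm Alg (sig n))) by (apply Rlt_le_trans with 1; [lra|apply Rmax_l]).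
  assert (t0 := tv_nonneg Alg HA (sig n) (Hsfa n) (Hsbd n) A a).
  assert (t1 := tv_mono Alg HA (sig n) (Hsfa n) (Hsbd n) setT A (alg_T _ HA) a (fun x _ => I)).
  assert (t2 := Rmax_r 1 (ba_norm Alg (sig n))). unfold ba_norm in *. split.
  unfold Rdiv; apply Rmult_le_pos; [lra| apply Rlt_le, Rinv_0_lt_compat; lra]. apply Rmult_le_reg_r with (Rmax 1 (tv Alg (sig n) setT)); auto.
  unfold Rdiv. rewrite Rmult_assoc, Rinv_l by lra. lra. Qed.

Lemma nu_fa n : fa Alg (nu n).
Proof using HA Hsfa Hsbd. intros A B a b d. unfold nu. rewrite (tv_fa Alg HA (sig n) (Hsfa n) (Hsbd n)); auto. lra. Qed.

Lemma term_bnd A n : Alg A -> 0 <= term A n <= alpha n.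
Proof using HA Hsfa Hsbd Hap. intro a. unfold term. destruct (nu_bnd n A a). specialize (Hap n). split.
  apply Rmult_le_pos; auto. rewrite <- (Rmult_1_r (alpha n)) at 2. apply Rmult_le_compat_l; auto. Qed.

Lemma term_cv A : Alg A -> exists l, infinite_sum (term A) l.
Proof using HA Hsfa Hsbd Hap Has. intro a. destruct (growing_cv (fun N => sum_f_R0 (term A) N)) as [l hl].
  - intro n. simpl. destruct (term_bnd A (S n) a). lra.
  - exists 1. intros x [i ->]. apply Rle_trans with (sum_f_R0 alpha i).
    apply sum_Rle; intros; apply term_bnd; auto. apply is_sum_bound; auto.
  - exists l; exact hl. Qed.

Variable m : (O -> Prop) -> R.
Hypothesis Hm : forall A, Alg A -> infinite_sum (term A) (m A).

Lemma AM_fa : fa Alg m.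
Proof using HA Hsfa Hsbd Hap Has Hm. intros A B a b d.
  assert (h := CV_plus _ _ _ _ (Hm A a) (Hm B b)).
  apply (UL_sequence (fun N => sum_f_R0 (term (setU A B)) N)). apply Hm; apply alg_U; auto.
  eapply Un_cv_ext; [|exact h]. intro N; simpl. rewrite <- plus_sum. apply sum_eq. intros i _.
  unfold term. rewrite nu_fa; auto. lra. Qed.

Lemma AM_ge A k : Alg A -> term A k <= m A.
Proof using HA Hsfa Hsbd Hap Has Hm. intro a. apply Rle_trans with (sum_f_R0 (term A) k).
  destruct k. simpl; lra. rewrite tech5. assert (0 <= sum_f_R0 (term A) k) by (apply sum_nonneg; intro; apply term_bnd; auto). lra.
  apply sum_incr. apply Hm; auto. intro; apply term_bnd; auto. Qed.

Lemma AM_pos : pos Alg m.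
Proof using HA Hsfa Hsbd Hap Has Hm. intros A a. apply Rle_trans with (term A 0). apply term_bnd; auto. apply AM_ge; auto. Qed.

Lemma AM_tail A N : Alg A -> m A <= sum_f_R0 (term A) N + (1 - sum_f_R0 alpha N).
Proof using HA Hsfa Hsbd Hap Has Hm. intro a. apply (cv_le _ _ _ (Hm A a)). intro k.
  assert (hs : sum_f_R0 alpha N <= 1) by (apply is_sum_bound; auto).
  destruct (Compare_dec.le_lt_dec k N).
  - assert (sum_f_R0 (term A) k <= sum_f_R0 (term A) N) by (apply sum_mono; auto; intro; apply term_bnd; auto). lra.
  - assert (sum_f_R0 alpha k <= 1) by (apply is_sum_bound; auto).
    replace k with (N + (k - N))%nat by lia.
    assert (h := sum_diff_le (term A) alpha N (k - N) (fun i => proj2 (term_bnd A i a))).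
    replace (N + (k - N))%nat with k in * by lia. lra. Qed.

Lemma AM_le1 A : Alg A -> m A <= 1.
Proof using HA Hsfa Hsbd Hap Has Hm. intro a. apply (cv_le _ _ _ (Hm A a)). intro k.
  apply Rle_trans with (sum_f_R0 alpha k). apply sum_Rle; intros; apply term_bnd; auto. apply is_sum_bound; auto. Qed.

Lemma AM_bdd : bdd Alg m.
Proof using HA Hsfa Hsbd Hap Has Hm. exists 1. intros A a. rewrite Rabs_right. apply AM_le1; auto. apply Rle_ge, AM_pos; auto. Qed.
End AM.

Definition gam (n : nat) : R := (/2) ^ (S n).
Lemma gam_pos n : 0 < gam n.
Proof. unfold gam. apply pow_lt. lra. Qed.
Lemma gam_sum N : sum_f_R0 gam N = 1 - (/2) ^ (S N).
Proof. induction N. unfold gam; simpl; lra. rewrite tech5, IHN. unfold gam. simpl. lra. Qed.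
Lemma gam_is : infinite_sum gam 1.
Proof. intros eps he. destruct (pow_lt_1_zero (/2)) with eps as [N hN]; auto.
  rewrite Rabs_right; lra. exists N. intros n hn. unfold Rdist. rewrite gam_sum.
  replace (1 - (/2) ^ S n - 1) with (- (/2)^ S n) by ring. rewrite Rabs_Ropp. apply hN. lia. Qed.

Section Dom.
Context {O : Type} (Alg : (O -> Prop) -> Prop) (HA : is_algebra Alg).

Lemma AM_dom sig alpha m sig' alpha' m' :
  (forall n, fa Alg (sig n)) -> (forall n, bdd Alg (sig n)) -> (forall n, 0 < alpha n) -> infinite_sum alpha 1 ->
  (forall A, Alg A -> infinite_sum (term Alg sig alpha A) (m A)) ->
  (forall n, fa Alg (sig' n)) -> (forall n, bdd Alg (sig' n)) -> (forall n, 0 <= alpha' n) -> infinite_sum alpha' 1 ->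
  (forall A, Alg A -> infinite_sum (term Alg sig' alpha' A) (m' A)) ->
  (forall n, exists j, sig' n = sig j) ->
  forall eps, 0 < eps -> exists d, 0 < d /\ forall B, Alg B -> m B < d -> m' B < eps.
Proof. intros f b ap asum hm f' b' ap' asum' hm' H eps he.
  assert (ap0 : forall n, 0 <= alpha n) by (intro n; apply Rlt_le; auto).
  destruct (asum' (eps/2)) as [N hN]; [lra|]. specialize (hN N (le_n N)). unfold Rdist in hN.
  apply Rabs_def2 in hN.
  set (J := fun n => proj1_sig (constructive_indefinite_description _ (H n))).
  assert (hJ : forall n, sig' n = sig (J n)) by (intro n; unfold J; destruct constructive_indefinite_description; auto).
  set (C := sum_f_R0 (fun n => alpha' n / alpha (J n)) N).
  assert (hC : 0 <= C).
  { apply sum_nonneg. intro i. unfold Rdiv. apply Rmult_le_pos; auto. apply Rlt_le, Rinv_0_lt_compat; auto. }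
  exists (eps / (2 * (C + 1))). split. apply Rdiv_lt_0_compat; lra.
  intros B bB mB.
  assert (t := AM_tail Alg HA sig' f' b' alpha' ap' asum' m' hm' B N bB).
  assert (sum_f_R0 (term Alg sig' alpha' B) N <= C * m B).
  { unfold C. rewrite Rmult_comm, scal_sum. apply sum_Rle. intros i _.
    unfold term. unfold nu at 1. rewrite hJ. fold (nu Alg sig (J i) B).
    assert (g := AM_ge Alg HA sig f b alpha ap0 asum m hm B (J i) bB). unfold term in g.
    specialize (ap (J i)). specialize (ap' i).
    replace (alpha' i / alpha (J i) * m B) with (alpha' i * (m B / alpha (J i))) by (field; lra).
    apply Rmult_le_compat_l; auto. apply Rmult_le_reg_l with (alpha (J i)); auto.
    replace (alpha (J i) * (m B / alpha (J i))) with (m B) by (field; lra). exact g. }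
  assert (0 <= m B) by (apply (AM_pos Alg HA sig f b alpha ap0 asum m hm); auto).
  assert (C * m B <= eps / 2).
  { apply Rle_trans with (C * (eps / (2 * (C + 1)))). apply Rmult_le_compat_l; lra.
    apply Rmult_le_reg_r with (2 * (C + 1)). lra.
    replace (C * (eps / (2 * (C + 1))) * (2 * (C + 1))) with (C * eps) by (field; lra).
    replace (eps / 2 * (2 * (C + 1))) with (C * eps + eps) by field. lra. }
  lra. Qed.
End Dom.

Section CA.
Context {O : Type} (Alg : (O -> Prop) -> Prop) (HA : is_algebra Alg).
Variable An : nat -> O -> Prop.
Hypothesis HAn : forall n, Alg (An n).
Hypothesis Hdj : forall i j, i <> j -> disjoint (An i) (An j).

Definition Un (N : nat) : O -> Prop := fun x => exists n, (n <= N)%nat /\ An n x.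
Definition Uall : O -> Prop := fun x => exists n, An n x.

Lemma Un_S N : Un (S N) = setU (Un N) (An (S N)).
Proof. apply set_ext; intro x; unfold Un, setU; split.
  - intros [n [h a]]. destruct (Nat.eq_dec n (S N)) as [->|ne]. right; auto. left; exists n; split; auto; lia.
  - intros [[n [h a]]|a]. exists n; split; auto. exists (S N); split; auto. Qed.
Lemma Un_0 : Un 0 = An 0.
Proof. apply set_ext; intro x; unfold Un; split. intros [n [h a]]. replace n with 0%nat in a by lia; auto.
  intro a; exists 0%nat; split; auto. Qed.
Lemma Un_alg N : Alg (Un N).
Proof using HA HAn. induction N. rewrite Un_0; auto. rewrite Un_S. apply alg_U; auto. Qed.
Lemma fa_Un phi N : fa Alg phi -> phi (Un N) = sum_f_R0 (fun n => phi (An n)) N.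
Proof using HA HAn Hdj. intro f. induction N. rewrite Un_0; reflexivity.
  rewrite Un_S, tech5, f, IHN; auto. apply Un_alg. intros x [[n [h a]] b]. refine (Hdj n (S N) _ x _); [lia|split; auto]. Qed.
Lemma Un_sub N : sub (Un N) Uall.
Proof. intros x [n [_ a]]; exists n; auto. Qed.

Hypothesis HU : Alg Uall.

Lemma R_split phi N : fa Alg phi -> phi Uall = sum_f_R0 (fun n => phi (An n)) N + phi (setD Uall (Un N)).
Proof using HA HAn Hdj HU. intro f. rewrite <- fa_Un; auto. apply (fa_sub Alg HA phi f); auto. apply Un_alg. apply Un_sub. Qed.

Lemma ca_dom nu rho : fa Alg nu -> fa Alg rho -> (forall A, Alg A -> 0 <= nu A <= rho A) ->
  infinite_sum (fun n => rho (An n)) (rho Uall) -> infinite_sum (fun n => nu (An n)) (nu Uall).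
Proof using HA HAn Hdj HU. intros fn fr b h eps he. destruct (h eps he) as [N hN]. exists N. intros n hn.
  specialize (hN n hn). unfold Rdist in *. rewrite (R_split nu n fn). rewrite (R_split rho n fr) in hN.
  assert (Alg (setD Uall (Un n))) by (apply alg_D; auto; apply Un_alg).
  destruct (b _ H). rewrite Rabs_left1 in * by lra. lra. Qed.

Lemma ca_Pp lam : fa Alg lam -> bdd Alg lam ->
  (forall Bn : nat -> O -> Prop, (forall n, Alg (Bn n)) -> (forall i j, i <> j -> disjoint (Bn i) (Bn j)) ->
     Alg (fun x => exists n, Bn n x) -> infinite_sum (fun n => lam (Bn n)) (lam (fun x => exists n, Bn n x))) ->
  infinite_sum (fun n => Pp Alg lam (An n)) (Pp Alg lam Uall).
Proof using HA HAn Hdj HU. intros f b ca.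
  assert (fP := Pp_fa Alg HA lam f b). assert (pP := Pp_nonneg Alg HA lam f b).
  set (s := fun N => sum_f_R0 (fun n => Pp Alg lam (An n)) N).
  assert (sle : forall N, s N <= Pp Alg lam Uall).
  { intro N. unfold s. rewrite <- fa_Un; auto. apply (pos_mono Alg HA); auto. intros A _; apply pP. apply Un_alg. apply Un_sub. }
  destruct (growing_cv s) as [T hT].
  { intro n; unfold s; simpl. specialize (pP (An (S n))). lra. }
  { exists (Pp Alg lam Uall). intros x [i ->]. auto. }
  assert (sT : forall N, s N <= T) by (intro N; apply sum_incr; auto).
  assert (TP : T <= Pp Alg lam Uall) by (apply (cv_le _ _ _ hT); auto).
  cut (Pp Alg lam Uall <= T). intro k. replace (Pp Alg lam Uall) with T by lra. exact hT.
  assert (e := R_split (Pp Alg lam) 0 fP). 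
  set (N := 0%nat). clearbody N.
  assert (e' := R_split (Pp Alg lam) N fP). fold (s N) in e'.
  assert (Pp Alg lam (setD Uall (Un N)) <= T - s N); [|lra].
  apply Pp_le; auto. intros B bB sB.
  set (Bn := fun n => setI B (An n)).
  assert (hB : (fun x => exists n, Bn n x) = B).
  { apply set_ext; intro x; split. intros [n [u _]]; auto. intro u. destruct (sB x u) as [[n a] _]. exists n; split; auto. }
  assert (cB := ca Bn). rewrite hB in cB. specialize (cB (fun n => alg_I _ HA _ _ bB (HAn n))).
  assert (cB' : infinite_sum (fun n => lam (Bn n)) (lam B)).
  { apply cB; auto. intros i j ij x [[_ u] [_ v]]. refine (Hdj i j ij x _); auto. }
  set (d := fun n => if Compare_dec.le_lt_dec n N then 0 else Pp Alg lam (An n)).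
  assert (hd : forall n, lam (Bn n) <= d n).
  { intro n. unfold d. destruct Compare_dec.le_lt_dec.
    - replace (Bn n) with (@set0 O). rewrite (fa_0 Alg HA lam f); lra.
      apply set_ext; intro x; unfold Bn, setI, set0; split; [tauto|]. intros [u a].
      destruct (sB x u) as [_ nu']. apply nu'. exists n; auto.
    - apply Pp_ge; auto. apply alg_I; auto. intros x [_ a]; auto. }
  assert (d0 : sum_f_R0 d N = 0).
  { rewrite (sum_eq d (fun _ => 0)). rewrite sum_cte; lra. intros i hi; unfold d. destruct Compare_dec.le_lt_dec; auto; lia. }
  assert (dj : forall j, sum_f_R0 d (N + j) = s (N + j)%nat - s N).
  { induction j. rewrite Nat.add_0_r; lra. rewrite Nat.add_succ_r. unfold s in *. rewrite !tech5, IHj.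
    unfold d. destruct Compare_dec.le_lt_dec; [lia|]. lra. }
  apply (cv_le _ _ _ cB'). intro k. apply Rle_trans with (sum_f_R0 d k). apply sum_Rle; auto.
  destruct (Compare_dec.le_lt_dec k N).
  - assert (sum_f_R0 d k <= sum_f_R0 d N).
    { apply sum_mono; auto. intro i; unfold d; destruct Compare_dec.le_lt_dec; auto; lra. }
    specialize (sT N). lra.
  - replace k with (N + (k - N))%nat by lia. rewrite dj. specialize (sT (N + (k - N))%nat). lra. Qed.
End CA.

Section Comb.
Context {O : Type} (Alg : (O -> Prop) -> Prop).
Lemma fa_minus (a b : (O -> Prop) -> R) : fa Alg a -> fa Alg b -> fa Alg (fun A => a A - b A).
Proof. intros f g A B x y d. rewrite f, g; auto. lra. Qed.
Lemma fa_plus (a b : (O -> Prop) -> R) : fa Alg a -> fa Alg b -> fa Alg (fun A => a A + b A).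
Proof. intros f g A B x y d. rewrite f, g; auto. lra. Qed.
Lemma bdd_minus (a b : (O -> Prop) -> R) : bdd Alg a -> bdd Alg b -> bdd Alg (fun A => a A - b A).
Proof. intros [K f] [L g]. exists (K + L). intros A x. specialize (f A x). specialize (g A x).
  apply Rabs_bnd in f. apply Rabs_bnd in g. apply Rabs_le. lra. Qed.
Lemma bdd_plus (a b : (O -> Prop) -> R) : bdd Alg a -> bdd Alg b -> bdd Alg (fun A => a A + b A).
Proof. intros [K f] [L g]. exists (K + L). intros A x. specialize (f A x). specialize (g A x).
  apply Rabs_bnd in f. apply Rabs_bnd in g. apply Rabs_le. lra. Qed.
Lemma bdd_dom (a b : (O -> Prop) -> R) : bdd Alg b -> (forall A, Alg A -> 0 <= a A <= b A) -> bdd Alg a.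
Proof. intros [K f] h. exists K. intros A x. specialize (f A x). specialize (h A x).
  apply Rabs_bnd in f. apply Rabs_le. lra. Qed.
End Comb.

Section Exist.
Context {O : Type} (Alg : (O -> Prop) -> Prop) (HA : is_algebra Alg).
Variable rho : (O -> Prop) -> R.
Hypothesis Hrf : fa Alg rho.
Hypothesis Hrb : bdd Alg rho.
Hypothesis Hrp : pos Alg rho.
Variable M : ((O -> Prop) -> R) -> Prop.
Hypothesis HMf : forall mu, M mu -> fa Alg mu.
Hypothesis HMb : forall mu, M mu -> bdd Alg mu.
Variable mu0 : (O -> Prop) -> R.
Hypothesis Hmu0 : M mu0.

Definition SEQ (s : nat -> (O -> Prop) -> R) := forall n, M (s n).
Definition mS (s : nat -> (O -> Prop) -> R) : (O -> Prop) -> R := fun A => ser (term Alg s gam A).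

Section OneSeq.
Variable s : nat -> (O -> Prop) -> R.
Hypothesis Hs : SEQ s.
Lemma s_fa : forall n, fa Alg (s n). Proof using HMf Hs. intro; apply HMf, Hs. Qed.
Lemma s_bd : forall n, bdd Alg (s n). Proof using HMb Hs. intro; apply HMb, Hs. Qed.
Lemma gam_nn : forall n, 0 <= gam n. Proof. intro; apply Rlt_le, gam_pos. Qed.
Lemma mS_is : forall A, Alg A -> infinite_sum (term Alg s gam A) (mS s A).
Proof using HA HMf HMb Hs. intros A a. apply ser_spec. apply (term_cv Alg HA s s_fa s_bd gam gam_nn gam_is A a). Qed.
Lemma mS_fa : fa Alg (mS s). Proof using HA HMf HMb Hs. exact (AM_fa Alg HA s s_fa s_bd gam gam_nn gam_is _ mS_is). Qed.
Lemma mS_pos : pos Alg (mS s). Proof using HA HMf HMb Hs. exact (AM_pos Alg HA s s_fa s_bd gam gam_nn gam_is _ mS_is). Qed.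
Lemma mS_bdd : bdd Alg (mS s). Proof using HA HMf HMb Hs. exact (AM_bdd Alg HA s s_fa s_bd gam gam_nn gam_is _ mS_is). Qed.
End OneSeq.

Lemma mono_seq s s' : SEQ s -> SEQ s' -> (forall n, exists j, s' n = s j) ->
  forall phi, fa Alg phi -> bdd Alg phi -> forall A, perp Alg phi (mS s) A <= perp Alg phi (mS s') A.
Proof using HA HMf HMb. intros hs hs' h phi f b A.
  apply (perp_mono_m Alg HA phi (mS s) (mS s') f b (mS_fa s hs) (mS_fa s' hs') (mS_pos s hs) (mS_pos s' hs')).
  intros eps he. apply (AM_dom Alg HA s gam (mS s) s' gam (mS s') (s_fa s hs) (s_bd s hs) gam_pos gam_is (mS_is s hs)
    (s_fa s' hs') (s_bd s' hs') gam_nn gam_is (mS_is s' hs') h eps he). Qed.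

Definition w s := perp Alg rho (mS s) setT.
Definition tinf := - Rsup (fun x => exists s, SEQ s /\ x = - w s).

Lemma w_nn s : SEQ s -> 0 <= w s.
Proof using HA HMf HMb Hrf Hrb. intro hs. apply (perp_nonneg Alg HA rho (mS s) Hrf Hrb (mS_fa s hs) (mS_pos s hs)). Qed.

Lemma t_le s : SEQ s -> tinf <= w s.
Proof using HA HMf HMb Hrf Hrb. intro hs. unfold tinf. cut (- w s <= Rsup (fun x => exists s, SEQ s /\ x = - w s)). lra.
  apply Rsup_ub. exists 0. intros x [s' [h ->]]. assert (h' := w_nn s' h). lra. eauto. Qed.

Lemma t_approx eta : 0 < eta -> exists s, SEQ s /\ w s <= tinf + eta.
Proof using HA HMf HMb Hrf Hrb Hmu0. intro he. apply NNPP; intro H.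
  assert (Rsup (fun x => exists s, SEQ s /\ x = - w s) <= - (tinf + eta)).
  { apply Rsup_le. exists (- w (fun _ => mu0)). exists (fun _ => mu0); split; auto. intro; auto.
    intros x [s [hs ->]]. apply Ropp_le_contravar. apply Rnot_lt_le. intro k. apply H. exists s; split; auto; lra. }
  unfold tinf at 1 in H0. lra. Qed.

Lemma INR1 k : 0 < INR k + 1. Proof. assert (h := pos_INR k). lra. Qed.
Definition sk (k : nat) : nat -> (O -> Prop) -> R :=
  proj1_sig (constructive_indefinite_description _ (t_approx (/ (INR k + 1)) (Rinv_0_lt_compat _ (INR1 k)))).

Lemma sk_spec k : SEQ (sk k) /\ w (sk k) <= tinf + / (INR k + 1).
Proof. unfold sk. destruct constructive_indefinite_description as [s h]. simpl. exact h. Qed.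

Definition ss : nat -> (O -> Prop) -> R := fun j => sk (fst (of_nat j)) (snd (of_nat j)).
Lemma ss_SEQ : SEQ ss.
Proof. intro j. unfold ss. apply (proj1 (sk_spec _)). Qed.

Lemma ss_w : w ss = tinf.
Proof using HA HMf HMb Hrf Hrb Hmu0. apply Rle_antisym; [|apply t_le, ss_SEQ].
  apply le_eps; intros eta he. destruct (archimed_cor1 eta he) as [N [h1 h2]].
  destruct (sk_spec N) as [hs hw].
  assert (w ss <= w (sk N)).
  { apply (mono_seq ss (sk N) ss_SEQ hs); auto.
    intro n. exists (to_nat (N, n)). unfold ss. rewrite cancel_of_to. reflexivity. }
  assert (/ (INR N + 1) <= / INR N).
  { apply Rinv_le_contravar. apply lt_0_INR; auto. lra. }
  lra. Qed.

Definition mstar := mS ss.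

Lemma sing_main mu : M mu -> forall eps, 0 < eps ->
  exists A, Alg A /\ perp Alg rho mstar A + tv Alg mu (setC A) < eps.
Proof using HA HMf HMb Hrf Hrb Hrp Hmu0. intros hmu eps he.
  set (s' := fun n => match n with 0%nat => mu | S k => ss k end).
  assert (hs' : SEQ s') by (intros [|k]; simpl; auto; apply ss_SEQ).
  assert (e1 : forall A, perp Alg rho (mS s') A <= perp Alg rho mstar A).
  { intro A. apply (mono_seq s' ss hs' ss_SEQ); auto. intro n; exists (S n); reflexivity. }
  assert (e2 : tinf <= w s') by (apply t_le; auto).
  assert (fs := perp_fa Alg HA rho (mS s') Hrf Hrb (mS_fa s' hs') (mS_pos s' hs') Hrp).
  assert (fst' := perp_fa Alg HA rho mstar Hrf Hrb (mS_fa ss ss_SEQ) (mS_pos ss ss_SEQ) Hrp).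
  assert (e3 : forall A, Alg A -> perp Alg rho mstar A <= perp Alg rho (mS s') A).
  { intros A a. assert (c1 := fa_compl Alg HA _ fs A a). assert (c2 := fa_compl Alg HA _ fst' A a).
    assert (k := e1 (setC A)). assert (k' := ss_w). unfold w, mstar in *. lra. }
  set (c := Rmax 1 (ba_norm Alg mu)).
  assert (hc : 1 <= c) by apply Rmax_l.
  destruct (perp_sing Alg HA rho (mS s') Hrf Hrb (mS_fa s' hs') (mS_pos s' hs') Hrp (eps / (1 + 2 * c))) as [A [a hA]].
  { apply Rdiv_lt_0_compat; lra. }
  exists A; split; auto.
  assert (g := AM_ge Alg HA s' (s_fa s' hs') (s_bd s' hs') gam gam_nn gam_is (mS s') (mS_is s' hs') (setC A) 0 (alg_C _ HA _ a)).
  unfold term, nu, gam in g. simpl in g. fold c in g.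
  assert (hpn := perp_nonneg Alg HA rho (mS s') Hrf Hrb (mS_fa s' hs') (mS_pos s' hs') A).
  assert (hmn := mS_pos s' hs' (setC A) (alg_C _ HA _ a)).
  assert (tv Alg mu (setC A) <= 2 * c * mS s' (setC A)).
  { replace (tv Alg mu (setC A)) with (2 * c * (/ 2 * 1 * (tv Alg mu (setC A) / c))) by (field; lra).
    apply Rmult_le_compat_l; lra. }
  assert (e4 := e3 A a).
  assert (perp Alg rho (mS s') A + mS s' (setC A) < eps / (1 + 2 * c)) by exact hA.
  assert ((1 + 2 * c) * (perp Alg rho (mS s') A + mS s' (setC A)) < eps).
  { apply Rmult_lt_reg_r with (/ (1 + 2 * c)). apply Rinv_0_lt_compat; lra.
    replace ((1 + 2 * c) * (perp Alg rho (mS s') A + mS s' (setC A)) * / (1 + 2 * c)) with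
      (perp Alg rho (mS s') A + mS s' (setC A)) by (field; lra). exact H0. }
  nra. Qed.
End Exist.

Lemma choice_nat {T : Type} (Q : nat -> T -> Prop) : (forall n, exists x, Q n x) -> exists f, forall n, Q n (f n).
Proof. intro h. exists (fun n => proj1_sig (constructive_indefinite_description _ (h n))).
  intro n. destruct constructive_indefinite_description; auto. Qed.

Section Uniq.
Context {O : Type} (Alg : (O -> Prop) -> Prop) (HA : is_algebra Alg).

Lemma pos_subadd phi X Y : fa Alg phi -> pos Alg phi -> Alg X -> Alg Y -> phi (setU X Y) <= phi X + phi Y.
Proof. intros f p x y. replace (setU X Y) with (setU X (setD Y X)).
  rewrite f; auto. assert (phi (setD Y X) <= phi Y). apply (pos_mono Alg HA); auto. apply alg_D; auto.
  intros z [u _]; auto. lra. apply alg_D; auto. intros z [u [_ v]]; auto.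
  apply set_ext; intro z; unfold setU, setD; split; [tauto|]. intros [u|u]; [left; auto|]. destruct (classic (X z)); tauto. Qed.

Lemma Un_subadd phi An N : fa Alg phi -> pos Alg phi -> (forall n, Alg (An n)) ->
  phi (Un An N) <= sum_f_R0 (fun n => phi (An n)) N.
Proof. intros f p h. induction N. rewrite Un_0. simpl; lra.
  rewrite Un_S, tech5. assert (k := pos_subadd phi _ _ f p (Un_alg Alg HA An h N) (h (S N))). lra. Qed.

Lemma in_AM_props M m : (forall mu, M mu -> fa Alg mu) -> (forall mu, M mu -> bdd Alg mu) -> in_AM Alg M m ->
  exists sig alpha, (forall n, M (sig n)) /\ (forall n, 0 <= alpha n) /\ infinite_sum alpha 1 /\
    (forall A, Alg A -> infinite_sum (term Alg sig alpha A) (m A)) /\ fa Alg m /\ pos Alg m /\ bdd Alg m.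
Proof. intros hf hb [sig [alpha [h1 [h2 [h3 h4]]]]]. exists sig, alpha.
  assert (f : forall n, fa Alg (sig n)) by auto. assert (b : forall n, bdd Alg (sig n)) by auto.
  repeat split; auto.
  apply (AM_fa Alg HA sig f b alpha h2 h3 m h4).
  apply (AM_pos Alg HA sig f b alpha h2 h3 m h4).
  apply (AM_bdd Alg HA sig f b alpha h2 h3 m h4). Qed.

Variable M : ((O -> Prop) -> R) -> Prop.
Hypothesis HMf : forall mu, M mu -> fa Alg mu.
Hypothesis HMb : forall mu, M mu -> bdd Alg mu.

Lemma AM_small sig alpha m N eta G : (forall n, M (sig n)) -> (forall n, 0 <= alpha n) -> infinite_sum alpha 1 ->
  (forall A, Alg A -> infinite_sum (term Alg sig alpha A) (m A)) -> Alg G ->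
  (forall n, (n <= N)%nat -> tv Alg (sig n) G <= eta) ->
  m G <= eta + (1 - sum_f_R0 alpha N).
Proof using HA HMf HMb. intros hs ha hsum hm g hn.
  assert (f : forall n, fa Alg (sig n)) by auto. assert (b : forall n, bdd Alg (sig n)) by auto.
  assert (t := AM_tail Alg HA sig f b alpha ha hsum m hm G N g).
  assert (sum_f_R0 (term Alg sig alpha G) N <= eta * sum_f_R0 alpha N).
  { rewrite scal_sum. apply sum_Rle. intros n hn'. unfold term, nu.
    assert (c : 1 <= Rmax 1 (ba_norm Alg (sig n))) by apply Rmax_l.
    assert (tn := tv_nonneg Alg HA (sig n) (f n) (b n) G g).
    assert (tv Alg (sig n) G / Rmax 1 (ba_norm Alg (sig n)) <= eta).
    { apply Rle_trans with (tv Alg (sig n) G); auto.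
      unfold Rdiv. rewrite <- (Rmult_1_r (tv Alg (sig n) G)) at 2. apply Rmult_le_compat_l; auto.
      apply Rmult_le_reg_l with (Rmax 1 (ba_norm Alg (sig n))); [lra|]. rewrite Rinv_r by lra. lra. }
    apply Rmult_le_compat_l; auto. }
  assert (sum_f_R0 alpha N <= 1) by (apply is_sum_bound; auto).
  assert (0 <= sum_f_R0 alpha N) by (apply sum_nonneg; auto).
  assert (0 <= eta). { assert (k := hn 0%nat (Nat.le_0_l N)). assert (k' := tv_nonneg Alg HA (sig 0%nat) (f 0%nat) (b 0%nat) G g). lra. }
  nra. Qed.

Lemma tail_small alpha eps : (forall n, 0 <= alpha n) -> infinite_sum alpha 1 -> 0 < eps ->
  exists N, forall N', (N <= N')%nat -> 1 - sum_f_R0 alpha N' < eps.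
Proof. intros ha hs he. destruct (hs eps he) as [N hN]. exists N. intros N' h. specialize (hN N' h).
  unfold Rdist in hN. apply Rabs_def2 in hN. lra. Qed.

Lemma uniq_main lc lp lc' lp' lam : M_decomposition Alg M lam lc lp -> M_decomposition Alg M lam lc' lp' ->
  forall A, Alg A -> lc A = lc' A.
Proof using HA HMf HMb.
  intros [[fc bc] [[fp bp] [e [[m [am ac]] sg]]]] [[fc' bc'] [[fp' bp'] [e' [[m' [am' ac']] sg']]]] A0 a0.
  assert (bc0 : bdd Alg lc) by exact bc. assert (bc0' : bdd Alg lc') by exact bc'.
  assert (bp0 : bdd Alg lp) by exact bp. assert (bp0' : bdd Alg lp') by exact bp'.
  destruct (in_AM_props M m HMf HMb am) as [s [al [hs [hal [has [hm [mf [mp mb]]]]]]]].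
  destruct (in_AM_props M m' HMf HMb am') as [s' [al' [hs' [hal' [has' [hm' [mf' [mp' mb']]]]]]]].
  cut (Rabs (lc A0 - lc' A0) <= 0). intro k. assert (k' := Rabs_pos (lc A0 - lc' A0)).
  destruct (Req_dec (lc A0 - lc' A0) 0) as [z|z]. lra. apply Rabs_no_R0 in z. lra.
  apply le_eps. intros eps he. rewrite Rplus_0_l.
  destruct (ac (eps/3)) as [d1 [hd1 k1]]; [lra|]. destruct (ac' (eps/3)) as [d2 [hd2 k2]]; [lra|].
  set (d := Rmin d1 d2). assert (hd : 0 < d) by (apply Rmin_glb_lt; auto).
  destruct (tail_small al (d/2) hal has) as [N1 hN1]; [lra|].
  destruct (tail_small al' (d/2) hal' has') as [N2 hN2]; [lra|].
  set (N := max N1 N2).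
  set (eta := Rmin (d / 8) (eps / (12 * (INR N + 1)))).
  assert (hI := INR1 N).
  assert (heta : 0 < eta) by (apply Rmin_glb_lt; [lra| apply Rdiv_lt_0_compat; lra]).
  destruct (choice_nat (fun n B => Alg B /\ tv Alg lp B + tv Alg (s n) (setC B) < eta)) as [F1 h1].
  { intro n. apply (sg (s n) (hs n) eta heta). }
  destruct (choice_nat (fun n B => Alg B /\ tv Alg lp' B + tv Alg (s n) (setC B) < eta)) as [F2 h2].
  { intro n. apply (sg' (s n) (hs n) eta heta). }
  destruct (choice_nat (fun n B => Alg B /\ tv Alg lp B + tv Alg (s' n) (setC B) < eta)) as [F3 h3].
  { intro n. apply (sg (s' n) (hs' n) eta heta). }
  destruct (choice_nat (fun n B => Alg B /\ tv Alg lp' B + tv Alg (s' n) (setC B) < eta)) as [F4 h4].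
  { intro n. apply (sg' (s' n) (hs' n) eta heta). }
  set (An := fun n => setU (setI (F1 n) (F2 n)) (setI (F3 n) (F4 n))).
  assert (hAn : forall n, Alg (An n)).
  { intro n. unfold An. apply alg_U; auto; apply alg_I; auto; [apply h1|apply h2|apply h3|apply h4]. }
  set (G := Un An N). assert (g : Alg G) by (apply Un_alg; auto).
  assert (gc : Alg (setC G)) by (apply alg_C; auto).
  assert (tvf := fun phi f b => tv_fa Alg HA phi f b).
  assert (tvp := fun phi f b => tv_nonneg Alg HA phi f b).
  assert (TP : tv Alg lp G <= 2 * eta * (INR N + 1)).
  { apply Rle_trans with (sum_f_R0 (fun n => tv Alg lp (An n)) N). apply Un_subadd; auto.
    apply Rle_trans with (sum_f_R0 (fun _ => 2 * eta) N). apply sum_Rle. intros n _.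
    unfold An. eapply Rle_trans. apply pos_subadd; auto; apply alg_I; auto; [apply h1|apply h2|apply h3|apply h4].
    assert (tv Alg lp (setI (F1 n) (F2 n)) <= tv Alg lp (F1 n)).
    { apply tv_mono; auto. apply h1. apply alg_I; auto; [apply h1|apply h2]. intros z []; auto. }
    assert (tv Alg lp (setI (F3 n) (F4 n)) <= tv Alg lp (F3 n)).
    { apply tv_mono; auto. apply h3. apply alg_I; auto; [apply h3|apply h4]. intros z []; auto. }
    destruct (h1 n) as [u1 v1]. destruct (h3 n) as [u3 v3].
    assert (tv Alg (s n) (setC (F1 n)) >= 0). apply Rle_ge, tv_nonneg; auto. apply alg_C; auto.
    assert (tv Alg (s' n) (setC (F3 n)) >= 0). apply Rle_ge, tv_nonneg; auto. apply alg_C; auto.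
    lra. rewrite sum_cte. rewrite S_INR. lra. }
  assert (TP' : tv Alg lp' G <= 2 * eta * (INR N + 1)).
  { apply Rle_trans with (sum_f_R0 (fun n => tv Alg lp' (An n)) N). apply Un_subadd; auto.
    apply Rle_trans with (sum_f_R0 (fun _ => 2 * eta) N). apply sum_Rle. intros n _.
    unfold An. eapply Rle_trans. apply pos_subadd; auto; apply alg_I; auto; [apply h1|apply h2|apply h3|apply h4].
    assert (tv Alg lp' (setI (F1 n) (F2 n)) <= tv Alg lp' (F2 n)).
    { apply tv_mono; auto. apply h2. apply alg_I; auto; [apply h1|apply h2]. intros z []; auto. }
    assert (tv Alg lp' (setI (F3 n) (F4 n)) <= tv Alg lp' (F4 n)).
    { apply tv_mono; auto. apply h4. apply alg_I; auto; [apply h3|apply h4]. intros z []; auto. }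
    destruct (h2 n) as [u1 v1]. destruct (h4 n) as [u3 v3].
    assert (tv Alg (s n) (setC (F2 n)) >= 0). apply Rle_ge, tv_nonneg; auto. apply alg_C; auto.
    assert (tv Alg (s' n) (setC (F4 n)) >= 0). apply Rle_ge, tv_nonneg; auto. apply alg_C; auto.
    lra. rewrite sum_cte. rewrite S_INR. lra. }
  assert (SC : forall n, (n <= N)%nat -> tv Alg (s n) (setC G) <= 2 * eta).
  { intros n hn. destruct (h1 n) as [u1 v1]. destruct (h2 n) as [u2 v2].
    assert (fn : fa Alg (s n)) by auto. assert (bn : bdd Alg (s n)) by auto.
    apply Rle_trans with (tv Alg (s n) (setU (setC (F1 n)) (setC (F2 n)))).
    { apply (tv_mono Alg HA _ fn bn); [apply alg_U; auto; apply alg_C; auto| exact gc|]. intros z hz.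
      destruct (classic (F1 n z)); destruct (classic (F2 n z)); [|right; auto|left; auto|left; auto].
      exfalso; apply hz. exists n; split; auto. left; split; auto. }
    eapply Rle_trans. apply pos_subadd; auto; apply alg_C; auto.
    assert (0 <= tv Alg lp (F1 n)) by (apply tv_nonneg; auto). assert (0 <= tv Alg lp' (F2 n)) by (apply tv_nonneg; auto). lra. }
  assert (SC' : forall n, (n <= N)%nat -> tv Alg (s' n) (setC G) <= 2 * eta).
  { intros n hn. destruct (h3 n) as [u1 v1]. destruct (h4 n) as [u2 v2].
    assert (fn : fa Alg (s' n)) by auto. assert (bn : bdd Alg (s' n)) by auto.
    apply Rle_trans with (tv Alg (s' n) (setU (setC (F3 n)) (setC (F4 n)))).
    { apply (tv_mono Alg HA _ fn bn); [apply alg_U; auto; apply alg_C; auto| exact gc|]. intros z hz.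
      destruct (classic (F3 n z)); destruct (classic (F4 n z)); [|right; auto|left; auto|left; auto].
      exfalso; apply hz. exists n; split; auto. right; split; auto. }
    eapply Rle_trans. apply pos_subadd; auto; apply alg_C; auto.
    assert (0 <= tv Alg lp (F3 n)) by (apply tv_nonneg; auto). assert (0 <= tv Alg lp' (F4 n)) by (apply tv_nonneg; auto). lra. }
  assert (m1 := AM_small s al m N (2 * eta) (setC G) hs hal has hm gc SC).
  assert (m2 := AM_small s' al' m' N (2 * eta) (setC G) hs' hal' has' hm' gc SC').
  assert (n1 := hN1 N (Nat.le_max_l N1 N2)). assert (n2 := hN2 N (Nat.le_max_r N1 N2)).
  assert (eta <= d / 8) by apply Rmin_l.
  assert (d <= d1) by apply Rmin_l. assert (d <= d2) by apply Rmin_r.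
  assert (C1 : tv Alg lc (setC G) < eps / 3).
  { apply k1; auto. rewrite (tv_pos Alg HA m); auto. lra. }
  assert (C2 : tv Alg lc' (setC G) < eps / 3).
  { apply k2; auto. rewrite (tv_pos Alg HA m'); auto. lra. }
  assert (sp1 := fa_split Alg HA lc fc A0 G a0 g).
  assert (sp2 := fa_split Alg HA lc' fc' A0 G a0 g).
  assert (i1 : Alg (setI A0 G)) by (apply alg_I; auto).
  assert (i2 : Alg (setD A0 G)) by (apply alg_D; auto).
  assert (q1 := tv_ge_abs Alg HA lc fc bc (setC G) (setD A0 G) gc i2 (fun z h => proj2 h)).
  assert (q2 := tv_ge_abs Alg HA lc' fc' bc' (setC G) (setD A0 G) gc i2 (fun z h => proj2 h)).
  assert (q3 := tv_ge_abs Alg HA lp fp bp G (setI A0 G) g i1 (fun z h => proj2 h)).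
  assert (q4 := tv_ge_abs Alg HA lp' fp' bp' G (setI A0 G) g i1 (fun z h => proj2 h)).
  assert (ee := e _ i1). assert (ee' := e' _ i1).
  assert (eta * (INR N + 1) <= eps / 12).
  { assert (eta <= eps / (12 * (INR N + 1))) by apply Rmin_r.
    apply Rmult_le_reg_r with (/ (INR N + 1)). apply Rinv_0_lt_compat; lra.
    replace (eta * (INR N + 1) * / (INR N + 1)) with eta by (field; lra).
    replace (eps / 12 * / (INR N + 1)) with (eps / (12 * (INR N + 1))) by (field; lra). lra. }
  rewrite sp1, sp2.
  replace (lc (setI A0 G) + lc (setD A0 G) - (lc' (setI A0 G) + lc' (setD A0 G))) with
    ((lp' (setI A0 G) - lp (setI A0 G)) + (lc (setD A0 G) - lc' (setD A0 G))) by lra.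
  eapply Rle_trans. apply Rabs_triang. eapply Rle_trans. apply Rplus_le_compat; apply Rabs_triang.
  assert (r1 := Rabs_Ropp (lp (setI A0 G))). assert (r2 := Rabs_Ropp (lc' (setD A0 G))). lra. Qed.
End Uniq.

Section CA2.
Context {O : Type} (Alg : (O -> Prop) -> Prop) (HA : is_algebra Alg).
Lemma ca_minus (a b : (O -> Prop) -> R) : countably_additive Alg a -> countably_additive Alg b ->
  countably_additive Alg (fun A => a A - b A).
Proof. intros ha hb An h1 h2 h3. assert (k := CV_minus _ _ _ _ (ha An h1 h2 h3) (hb An h1 h2 h3)).
  eapply Un_cv_ext; [|exact k]. intro n. simpl. rewrite minus_sum. reflexivity. Qed.
Lemma ca_dom' nu rho : fa Alg nu -> fa Alg rho -> (forall A, Alg A -> 0 <= nu A <= rho A) ->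
  countably_additive Alg rho -> countably_additive Alg nu.
Proof. intros f g h c An h1 h2 h3. exact (ca_dom Alg HA An h1 h2 h3 nu rho f g h (c An h1 h2 h3)). Qed.
Lemma ca_Pp' lam : fa Alg lam -> bdd Alg lam -> countably_additive Alg lam -> countably_additive Alg (Pp Alg lam).
Proof. intros f b c An h1 h2 h3. exact (ca_Pp Alg HA An h1 h2 h3 lam f b c). Qed.
End CA2.

Theorem mainTheorem1 (Omega : Type) (Alg : (Omega -> Prop) -> Prop)
  (HAlg : is_algebra Alg)
  (lam : (Omega -> Prop) -> R) (Hlam : is_ba Alg lam)
  (M : ((Omega -> Prop) -> R) -> Prop)
  (HM : forall mu, M mu -> is_ba Alg mu)
  (HMne : exists mu, M mu) :
  (exists lc lp, M_decomposition Alg M lam lc lp /\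
     (positive_sf Alg lam -> positive_sf Alg lc /\ positive_sf Alg lp) /\
     (countably_additive Alg lam ->
        countably_additive Alg lc /\ countably_additive Alg lp)) /\
  (forall lc lp lc' lp',
     M_decomposition Alg M lam lc lp -> M_decomposition Alg M lam lc' lp' ->
     forall A, Alg A -> lc A = lc' A /\ lp A = lp' A).
Proof.
  assert (HMf : forall mu, M mu -> fa Alg mu) by (intros mu h; exact (proj1 (HM mu h))).
  assert (HMb : forall mu, M mu -> bdd Alg mu) by (intros mu h; exact (proj2 (HM mu h))).
  destruct Hlam as [lf lb]. change (fa Alg lam) in lf. change (bdd Alg lam) in lb.
  split.
  2:{ intros lc lp lc' lp' d1 d2 A a. assert (e := uniq_main Alg HAlg M HMf HMb lc lp lc' lp' lam d1 d2 A a).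
      split; auto. destruct d1 as [_ [_ [e1 _]]]. destruct d2 as [_ [_ [e2 _]]].
      specialize (e1 A a); specialize (e2 A a). lra. }
  destruct HMne as [mu0 Hmu0].
  set (lp_ := Pp Alg lam). set (ln_ := fun A => lp_ A - lam A). set (rho := fun A => lp_ A + ln_ A).
  assert (fp_ : fa Alg lp_) by apply (Pp_fa Alg HAlg lam lf lb).
  assert (bp_ : bdd Alg lp_) by apply (Pp_bdd Alg HAlg lam lf lb).
  assert (pp_ : pos Alg lp_) by (intros A _; apply (Pp_nonneg Alg HAlg lam lf lb)).
  assert (fn_ : fa Alg ln_) by (apply fa_minus; auto).
  assert (bn_ : bdd Alg ln_) by (apply bdd_minus; auto).
  assert (pn_ : pos Alg ln_) by (intros A a; unfold ln_; assert (k := Pp_ge_self Alg HAlg lam lf lb A a); fold lp_ in k; lra).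
  assert (fr : fa Alg rho) by (apply fa_plus; auto).
  assert (br : bdd Alg rho) by (apply bdd_plus; auto).
  assert (pr : pos Alg rho) by (intros A a; unfold rho; specialize (pp_ A a); specialize (pn_ A a); lra).
  set (mst := mstar Alg HAlg rho fr br M HMf HMb mu0 Hmu0).
  set (sst := ss Alg HAlg rho fr br M HMf HMb mu0 Hmu0).
  assert (hsst : SEQ M sst) by apply ss_SEQ.
  assert (fm : fa Alg mst) by apply (mS_fa Alg HAlg M HMf HMb sst hsst).
  assert (pm : pos Alg mst) by apply (mS_pos Alg HAlg M HMf HMb sst hsst).
  assert (bm : bdd Alg mst) by apply (mS_bdd Alg HAlg M HMf HMb sst hsst).
  set (pp := perp Alg lp_ mst). set (pn := perp Alg ln_ mst).
  assert (fpp : fa Alg pp) by apply (perp_fa Alg HAlg lp_ mst fp_ bp_ fm pm pp_).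
  assert (fpn : fa Alg pn) by apply (perp_fa Alg HAlg ln_ mst fn_ bn_ fm pm pn_).
  assert (pp_le : forall A, Alg A -> 0 <= pp A <= lp_ A).
  { intros A a; split. apply (perp_nonneg Alg HAlg lp_ mst fp_ bp_ fm pm). apply (perp_le_phi Alg HAlg lp_ mst fp_ bp_ fm pm pp_ A a). }
  assert (pn_le : forall A, Alg A -> 0 <= pn A <= ln_ A).
  { intros A a; split. apply (perp_nonneg Alg HAlg ln_ mst fn_ bn_ fm pm). apply (perp_le_phi Alg HAlg ln_ mst fn_ bn_ fm pm pn_ A a). }
  set (a := fun A => lp_ A - pp A). set (b := fun A => ln_ A - pn A).
  assert (fa_a : fa Alg a) by (apply fa_minus; auto). assert (fa_b : fa Alg b) by (apply fa_minus; auto).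
  assert (pa : pos Alg a) by (intros A x; unfold a; destruct (pp_le A x); lra).
  assert (pb : pos Alg b) by (intros A x; unfold b; destruct (pn_le A x); lra).
  assert (ba : bdd Alg a) by (apply (bdd_dom Alg a lp_ bp_); intros A x; unfold a; destruct (pp_le A x); split; lra).
  assert (bb : bdd Alg b) by (apply (bdd_dom Alg b ln_ bn_); intros A x; unfold b; destruct (pn_le A x); split; lra).
  assert (bpp : bdd Alg pp) by (apply (bdd_dom Alg pp lp_ bp_); auto).
  assert (bpn : bdd Alg pn) by (apply (bdd_dom Alg pn ln_ bn_); auto).
  exists (fun A => a A - b A), (fun A => pp A - pn A).
  split; [|split].
  - split; [split; [apply fa_minus; auto| apply bdd_minus; auto]|].
    split; [split; [apply fa_minus; auto| apply bdd_minus; auto]|].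
    split; [intros A x; unfold a, b, ln_; ring|].
    split.
    + exists mst. split.
      * exists sst, gam. split; auto. split; [apply gam_nn|]. split; [apply gam_is|].
        intros A x. exact (mS_is Alg HAlg M HMf HMb sst hsst A x).
      * intros eps he.
        destruct (perp_ac Alg HAlg lp_ mst fp_ bp_ fm pm pp_ (eps/2)) as [d1 [hd1 k1]]; [lra|].
        destruct (perp_ac Alg HAlg ln_ mst fn_ bn_ fm pm pn_ (eps/2)) as [d2 [hd2 k2]]; [lra|].
        exists (Rmin d1 d2); split. apply Rmin_glb_lt; auto. intros A x h.
        rewrite (tv_pos Alg HAlg mst A fm pm bm x) in h.
        assert (t := tv_diff Alg HAlg a b A fa_a fa_b pa pb (bdd_minus Alg a b ba bb) x).
        assert (h1 : mst A < d1) by (apply Rlt_le_trans with (Rmin d1 d2); auto; apply Rmin_l).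
        assert (h2 : mst A < d2) by (apply Rlt_le_trans with (Rmin d1 d2); auto; apply Rmin_r).
        specialize (k1 A x h1). specialize (k2 A x h2). unfold a, b in *. fold pp pn in k1, k2. lra.
    + intros mu hmu eps he.
      destruct (sing_main Alg HAlg rho fr br pr M HMf HMb mu0 Hmu0 mu hmu (eps/2)) as [A [x hA]]; [lra|].
      exists A; split; auto. fold mst in hA.
      assert (t := tv_diff Alg HAlg pp pn A fpp fpn (fun B y => proj1 (pp_le B y)) (fun B y => proj1 (pn_le B y)) (bdd_minus Alg pp pn bpp bpn) x).
      assert (q1 : pp A <= perp Alg rho mst A).
      { apply (perp_mono_phi Alg HAlg lp_ rho mst fp_ bp_ fr br fm pm). intros B y; unfold rho; specialize (pn_ B y); lra. }
      assert (q2 : pn A <= perp Alg rho mst A).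
      { apply (perp_mono_phi Alg HAlg ln_ rho mst fn_ bn_ fr br fm pm). intros B y; unfold rho; specialize (pp_ B y); lra. }
      assert (0 <= tv Alg mu (setC A)) by (apply (tv_nonneg Alg HAlg mu (HMf mu hmu) (HMb mu hmu)); apply alg_C; auto).
      lra.
  - intros hpos. assert (z : forall A, Alg A -> ln_ A = 0).
    { intros A x. apply Rle_antisym; [|apply pn_; auto]. unfold ln_, lp_.
      assert (Pp Alg lam A <= lam A); [|lra]. apply (Pp_le Alg HAlg lam lf lb). intros B y s.
      apply (pos_mono Alg HAlg lam lf B A hpos); auto. }
    split; intros A x; destruct (pp_le A x); destruct (pn_le A x); unfold a, b; rewrite (z A x) in *; lra.
  - intros hca.
    assert (c1 : countably_additive Alg lp_) by (apply ca_Pp'; auto).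
    assert (c2 : countably_additive Alg ln_) by (apply ca_minus; auto).
    assert (c3 : countably_additive Alg a) by (apply (ca_dom' Alg HAlg a lp_); auto; intros A x; unfold a; destruct (pp_le A x); split; lra).
    assert (c4 : countably_additive Alg b) by (apply (ca_dom' Alg HAlg b ln_); auto; intros A x; unfold b; destruct (pn_le A x); split; lra).
    assert (c5 : countably_additive Alg pp).
    { replace pp with (fun A => lp_ A - a A). apply ca_minus; auto.
      apply functional_extensionality; intro A; unfold a; ring. }
    assert (c6 : countably_additive Alg pn).
    { replace pn with (fun A => ln_ A - b A). apply ca_minus; auto.
      apply functional_extensionality; intro A; unfold b; ring. }
    split; apply ca_minus; auto.
Qed.
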